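(* Let $V\ge 1$, let $z\in\mathbb{R}^V$ be a logit vector and $p=\mathrm{softmax}(z)$, i.e. $p_i=e^{z_i}/\sum_{k=1}^V e^{z_k}$. Partition $\{1,\dots,V\}=\mathcal{P}\sqcup\mathcal{N}$ into correct tokens $\mathcal{P}$ and incorrect tokens $\mathcal{N}$. Let $N\ge 1$ be the number of sampled rollout tokens, let $A\subseteq\mathcal{P}$ be the set of sampled correct tokens, $B\subseteq\mathcal{N}$ the set of sampled incorrect tokens, and $U=\{1,\dots,V\}\setminus(A\cup B)$ the set of unsampled tokens. Let rewards $R_c\ge 0\ge R_w$ be given and set $R_j=R_c$ for $j\in A$, $R_j=R_w$ for $j\in B$, $R_j=0$ for $j\in U$. Define $P_{\mathrm{pos}}=\sum_{i\in A}p_i$, $P_{\mathrm{neg}}=\sum_{i\in B}p_i$, $Q_{\mathrm{pos}}=\sum_{i\in\mathcal{P}}p_i$, $Q_{\mathrm{neg}}=1-Q_{\mathrm{pos}}$, $A_2=\sum_{i\in A}p_i^2$, $B_2=\sum_{i\in B}p_i^2$, $U_{\mathrm{pos},2}=\sum_{i\in U\cap\mathcal{P}}p_i^2$, $U_{\mathrm{neg},2}=\sum_{i\in U\cap\mathcal{N}}p_i^2$, and $S_R=R_cP_{\mathrm{pos}}+R_wP_{\mathrm{neg}}$. Let $\eta>0$ and consider the one-step logit update (a gradient-descent step with learning rate $\eta$ on the surrogate loss $-\frac1N\sum_{i=1}^V R_i p_i$) $$\Delta z_j=\frac{\eta}{N}\,p_j\,(R_j-S_R),\qquad j=1,\dots,V,$$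 with induced first-order probability change $\Delta p_i=\sum_{j=1}^V\frac{\partial p_i}{\partial z_j}\Delta z_j=p_i\big(\Delta z_i-\sum_{j=1}^V p_j\Delta z_j\big)$, and let $\Delta Q_{\mathrm{pos}}=\sum_{i\in\mathcal{P}}\Delta p_i$. Then $$\Delta Q_{\mathrm{pos}}=\frac{\eta}{N}\Big[(R_c-S_R)\,Q_{\mathrm{neg}}\,A_2+(S_R-R_w)\,Q_{\mathrm{pos}}\,B_2+S_R\big(Q_{\mathrm{pos}}U_{\mathrm{neg},2}-Q_{\mathrm{neg}}U_{\mathrm{pos},2}\big)\Big].$$ Moreover $A_2,B_2\ge 0$ and $S_R\in[R_w,R_c]$, so $R_c-S_R\ge0$ and $S_R-R_w\ge 0$; hence the first two terms in the bracket are nonnegative.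
   Context: This models a single reinforcement-learning-with-verifiable-rewards update at the token level: $N$ tokens are sampled from $p$, sampled correct tokens receive reward $R_c$, sampled incorrect tokens receive reward $R_w$, and unsampled tokens receive reward $0$. $\Delta Q_{\mathrm{pos}}$ is the first-order (linearized) change in the total probability mass of correct tokens. *)

(* Defs.v *)
From HB Require Import structures.
From mathcomp Require Import all_boot all_order all_algebra.
From mathcomp Require Import all_classical all_reals all_analysis.
Set Implicit Arguments. Unset Strict Implicit. Unset Printing Implicit Defensive.
Import Order.TTheory GRing.Theory Num.Theory.
Local Open Scope ring_scope.

Section Defs.
Variables (R : realType) (V : nat).

Definition softmax (z : 'I_V -> R) (i : 'I_V) : R :=
  expR (z i) / \sum_(k < V) expR (z k).

Definition reward (A B : {set 'I_V}) (Rc Rw : R) (j : 'I_V) : R :=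
  if j \in A then Rc else if j \in B then Rw else 0.

Definition SR (p : 'I_V -> R) (A B : {set 'I_V}) (Rc Rw : R) : R :=
  Rc * (\sum_(i in A) p i) + Rw * (\sum_(i in B) p i).

Definition delta_z (p : 'I_V -> R) (A B : {set 'I_V}) (Rc Rw eta : R) (N : nat)
  (j : 'I_V) : R :=
  eta / N%:R * p j * (reward A B Rc Rw j - SR p A B Rc Rw).

(* first-order change Δp_i = Σ_j (∂p_i/∂z_j) Δz_j, with ∂p_i/∂z_j = p_i(δ_ij - p_j) *)
Definition delta_p (p dz : 'I_V -> R) (i : 'I_V) : R :=
  \sum_(j < V) (p i * ((i == j)%:R - p j)) * dz j.

End Defs.

(* Main.v *)
Require Import Defs.
From HB Require Import structures.
From mathcomp Require Import all_boot all_order all_algebra.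
From mathcomp Require Import all_classical all_reals all_analysis.
From mathcomp Require Import ring lra.
Import Order.TTheory GRing.Theory Num.Theory.
Local Open Scope ring_scope.

Lemma sumsetT (R : realType) (V : nat) (f : 'I_V -> R) :
  \sum_(i < V) f i = \sum_(i in [set: 'I_V]) f i.
Proof. by apply: eq_bigl => i; rewrite inE. Qed.

Lemma ineqS (R : realType) (Rc Rw x y : R) : 0 <= Rc -> Rw <= 0 ->
  0 <= x -> x <= 1 -> 0 <= y -> y <= 1 -> Rw <= Rc * x + Rw * y /\ Rc * x + Rw * y <= Rc.
Proof. move=> *; split; nra. Qed.

Section Help.
Variables (R : realType) (V : nat) (Pset A B : {set 'I_V}).
Hypotheses (hA : A \subset Pset) (hB : B \subset ~: Pset).

Lemma split_P (f : 'I_V -> R) :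
  \sum_(i in Pset) f i = \sum_(i in A) f i + \sum_(i in ~: (A :|: B) :&: Pset) f i.
Proof.
rewrite (big_setID A); congr (_ + _); apply: eq_bigl => i; rewrite !inE;
have := fintype.subsetP hA i; have := fintype.subsetP hB i; rewrite !inE;
case: (i \in A); case: (i \in B); case: (i \in Pset) => //= H1 H2;
by [have := H1 isT | have := H2 isT].
Qed.

Lemma split_all (f : 'I_V -> R) :
  \sum_(i < V) f i = \sum_(i in A) f i + \sum_(i in B) f i
    + \sum_(i in ~: (A :|: B) :&: Pset) f i + \sum_(i in ~: (A :|: B) :&: ~: Pset) f i.
Proof.
rewrite sumsetT (big_setID (A :|: B)) /= (big_setID A) /=.
rewrite [in X in _ + X = _](big_setID Pset) /=.
rewrite -!addrA; congr (_ + _); [|congr (_ + _); [|congr (_ + _)]];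
apply: eq_bigl => i; rewrite !inE;
have := fintype.subsetP hA i; have := fintype.subsetP hB i; rewrite !inE;
case: (i \in A); case: (i \in B); case: (i \in Pset) => //= H1 H2;
by [have := H1 isT | have := H2 isT].
Qed.
End Help.

Theorem theorem1 (R : realType) (V : nat) (hV : (1 <= V)%N)
  (z : 'I_V -> R) (Pset A B : {set 'I_V}) (N : nat) (hN : (1 <= N)%N)
  (hA : A \subset Pset) (hB : B \subset ~: Pset)
  (Rc Rw eta : R) (hRc : 0 <= Rc) (hRw : Rw <= 0) (heta : 0 < eta) :
  let p := softmax z in
  let U := ~: (A :|: B) in
  let Qpos := \sum_(i in Pset) p i in
  let Qneg := 1 - Qpos in
  let A2 := \sum_(i in A) p i ^+ 2 in
  let B2 := \sum_(i in B) p i ^+ 2 in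
  let Upos2 := \sum_(i in U :&: Pset) p i ^+ 2 in
  let Uneg2 := \sum_(i in U :&: ~: Pset) p i ^+ 2 in
  let S := SR p A B Rc Rw in
  let dz := delta_z p A B Rc Rw eta N in
  let dQpos := \sum_(i in Pset) delta_p p dz i in
  [/\ dQpos = eta / N%:R * ((Rc - S) * Qneg * A2 + (S - Rw) * Qpos * B2
                            + S * (Qpos * Uneg2 - Qneg * Upos2)),
      0 <= A2 /\ 0 <= B2, Rw <= S /\ S <= Rc,
      0 <= Rc - S /\ 0 <= S - Rw &
      0 <= (Rc - S) * Qneg * A2 /\ 0 <= (S - Rw) * Qpos * B2].
Proof.
move=> p U Qpos Qneg A2 B2 Upos2 Uneg2 S dz dQpos.
have p_ge0 : forall i, 0 <= p i.
  by move=> i; rewrite /p /softmax divr_ge0 // ?expR_ge0 // sumr_ge0 // => j _; rewrite expR_ge0.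
have sum1 : \sum_(i < V) p i = 1.
  rewrite /p /softmax -mulr_suml divff //.
  have : 0 < \sum_(k < V) expR (z k).
    case: V hV z {p_ge0 p Qpos Qneg A2 B2 Upos2 Uneg2 S dz dQpos U A B Pset hA hB} => // n _ z.
    rewrite big_ord_recl; apply: ltr_pwDl; first exact: expR_gt0.
    by apply: sumr_ge0 => j _; rewrite expR_ge0.
  by move/gt_eqF => ->.
have le1 : forall C : {set 'I_V}, \sum_(i in C) p i <= 1.
  move=> C; rewrite -sum1 sumsetT [X in _ <= X](big_setID C) /= -[X in X <= _]addr0; apply: lerD.
    by rewrite le_eqVlt; apply/orP; left; apply/eqP; apply: eq_bigl => i; rewrite !inE.
  by apply: sumr_ge0 => i _.
set c := eta / N%:R.
set D := \sum_(j < V) p j * dz j.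
have hdp : forall i, delta_p p dz i = p i * dz i - p i * D.
  move=> i; rewrite /delta_p /D mulr_sumr.
  under eq_bigr => j _ do rewrite mulrBr mulrBl mulrA.
  rewrite sumrB (bigD1 i) //= eqxx mulr1 big1 ?addr0; last first.
    by move=> j hj; rewrite eq_sym (negbTE hj) mulr0 !mul0r.
  rewrite /dz /delta_z; congr (_ - _); first ring.
  by apply: eq_bigr => j _; rewrite mulrA.
have dzA : forall i, i \in A -> p i * dz i = c * (Rc - S) * p i ^+ 2.
  by move=> i hi; rewrite /dz /delta_z /reward hi -/S -/c; ring.
have dzB : forall i, i \in B -> p i * dz i = c * (Rw - S) * p i ^+ 2.
  move=> i hi; have hiA : i \notin A.
    apply/negP => hiA'; have := fintype.subsetP hA i hiA'; have := fintype.subsetP hB i hi.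
    by rewrite inE => /negbTE ->.
  by rewrite /dz /delta_z /reward (negbTE hiA) hi -/S -/c; ring.
have dzU : forall C, forall i, i \in U :&: C -> p i * dz i = c * (0 - S) * p i ^+ 2.
  move=> C i; rewrite !inE negb_or => /andP [/andP [/negbTE h1 /negbTE h2] _].
  by rewrite /dz /delta_z /reward h1 h2 -/S -/c; ring.
have sA : \sum_(i in A) p i * dz i = c * (Rc - S) * A2.
  by rewrite /A2 mulr_sumr; apply: eq_bigr => i hi; rewrite dzA.
have sB : \sum_(i in B) p i * dz i = c * (Rw - S) * B2.
  by rewrite /B2 mulr_sumr; apply: eq_bigr => i hi; rewrite dzB.
have sUP : \sum_(i in U :&: Pset) p i * dz i = c * (0 - S) * Upos2.
  by rewrite /Upos2 mulr_sumr; apply: eq_bigr => i hi; rewrite (dzU _ _ hi).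
have sUN : \sum_(i in U :&: ~: Pset) p i * dz i = c * (0 - S) * Uneg2.
  by rewrite /Uneg2 mulr_sumr; apply: eq_bigr => i hi; rewrite (dzU _ _ hi).
have eqD : D = c * (Rc - S) * A2 + c * (Rw - S) * B2 + c * (0 - S) * Upos2 + c * (0 - S) * Uneg2.
  by rewrite /D (@split_all R V Pset A B hA hB) sA sB sUP sUN.
have eqQ : dQpos = c * ((Rc - S) * Qneg * A2 + (S - Rw) * Qpos * B2
                            + S * (Qpos * Uneg2 - Qneg * Upos2)).
  rewrite /dQpos; under eq_bigr => i _ do rewrite hdp.
  rewrite sumrB -mulr_suml -/Qpos (@split_P R V Pset A B hA hB) sA sUP eqD /Qneg; ring.
have A2ge : 0 <= A2 by apply: sumr_ge0 => i _; rewrite sqr_ge0.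
have B2ge : 0 <= B2 by apply: sumr_ge0 => i _; rewrite sqr_ge0.
have Pp0 : 0 <= \sum_(i in A) p i by apply: sumr_ge0.
have Pn0 : 0 <= \sum_(i in B) p i by apply: sumr_ge0.
have Pp1 := le1 A; have Pn1 := le1 B.
have Qp0 : 0 <= Qpos by apply: sumr_ge0.
have Qp1 : Qpos <= 1 := le1 Pset.
have [hS1 hS2] : Rw <= S /\ S <= Rc by rewrite /S /SR; apply: ineqS.
split => //; try split; try lra.
  by rewrite mulr_ge0 // mulr_ge0 // /Qneg; lra.
by rewrite mulr_ge0 // mulr_ge0 //; lra.
Qed.
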